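(* Let $G\in\mathcal{C}$, $N\unlhd G$, and let $(H,H,\vartheta)\in\mathcal{L}_N$ be good. Then for every $(H',H',\vartheta')\in\mathcal{L}_N$ with $(H',H',\vartheta')\neq(H,H,\vartheta)$, the Shoda pairs $(H,\ker\vartheta)$ and $(H',\ker\vartheta')$ do not realize the same primitive central idempotent of $\mathbb{Q}G$.
   Context: All groups are finite. $\mathcal{C}$ is the class of finite groups $G$ such that every subgroup and quotient group of $G$ is either abelian or contains a non-central abelian normal subgroup. $\psi^x(g)=\psi(xgx^{-1})$, $\psi^G$ induced character, $1_N$ trivial character. A Shoda pair of $G$ is $(H,K)$ with $K\unlhd H\le G$, $H/K$ cyclic, and $g\in G$, $[H,g]\cap H\subseteq K$ imply $g\in H$; it realizes the primitive central idempotent $e_{\mathbb{Q}}(\psi^G)$ where $\psi$ is linear on $H$ with kernel $K$ and $e_{\mathbb{Q}}(\chi)=\frac{\chi(1)}{|G|}\sum_{\sigma\in\operatorname{Gal}(\mathbb{Q}(\chi)/\mathbb{Q})}\sum_{g\in G}\sigma(\chi(g))g^{-1}$. An $N$-linear character triple of $G$ is $(H,A,\vartheta)$ with $H\le G$, $A\unlhd H$, $\vartheta$ a linear character of $A$ invariant in $H$, and $\ker(\vartheta^G)=N$. For $B\unlhd M\le G$ and linear $\lambda$ on $B$, $\widetilde{\operatorname{Lin}}(M|\lambda)$ is the set of linear characters of $M$ whose restriction to $B$ contains $\lambda$ and whose induction to $G$ has kernel $N$. For each triple a normal subgroup $\mathcal{A}=\mathcal{A}_{(H,A,\vartheta)}$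 of $H$ is fixed, of maximal order among normal subgroups of $H$ containing $\ker\vartheta$ with abelian quotient by $\ker\vartheta$. $\operatorname{Aut}(\mathbb{C}|\vartheta)\times H$ acts on $\widetilde{\operatorname{Lin}}(\mathcal{A}|\vartheta)$ by $(\sigma,h)\cdot\varphi=\sigma\circ\varphi^h$ ($\sigma$ a field automorphism of $\mathbb{C}$ fixing $\mathbb{Q}(\vartheta)$); fix orbit representatives $\mathfrak{Lin}(\mathcal{A}|\vartheta)$. If $H\neq A$, $Cl(H,A,\vartheta)=\{(I_H(\varphi),\mathcal{A},\varphi):\varphi\in\mathfrak{Lin}(\mathcal{A}|\vartheta)\}$, $I_H(\varphi)=\{h\in H:\varphi^h=\varphi\}$; if $H=A$, empty. $\mathcal{G}_N$: directed graph of $N$-linear triples reachable from $(G,N,1_N)$, edges $(u,v)$ whenever $v\in Cl(u)$; each vertex is reached by a unique directed path from the root. $\mathcal{L}_N$: vertices of the form $(H,H,\vartheta)$. For such a leaf with path $v_1=(G,N,1_N),\dots,v_n=(H,H,\vartheta)$, $n$ is its height and $v_i=(H_i,A_i,\vartheta_i)$ its $i$-th node; the leaf is good if for every $1<i\le n$ and $x\in N_{H_{i-1}}(\ker\vartheta_i)$ there is a field automorphism $\sigma$ of $\mathbb{C}$ with $(\vartheta^{H_i})^x=\sigma\circ\vartheta^{H_i}$. *)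

(* Defs.v *)
From HB Require Import structures.
From mathcomp Require Import all_boot all_order all_algebra all_fingroup all_solvable all_field all_character.
Unset Implicit Arguments.
Unset Strict Implicit.
Unset Printing Implicit Defensive.
Import GRing.Theory Num.Theory.
Local Open Scope ring_scope.
Local Open Scope group_scope.

Section Defs.
Variable gT : finGroupType.

Definition class_C (G : {group gT}) : Prop :=
  (forall H : {group gT}, H \subset G ->
     abelian H \/
     exists A : {group gT}, [/\ A <| H, abelian A & ~~ (A \subset 'Z(H))]) /\
  (forall M : {group gT}, M <| G ->
     abelian (G / M) \/
     exists A : {group coset_of M},
       [/\ A <| G / M, abelian A & ~~ (A \subset 'Z(G / M))]).

Record triple := Triple { tH : {group gT}; tA : {group gT}; tth : 'CF(tA) }.

Variables (G N : {group gT}).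

Definition nlinear (u : triple) : Prop :=
  [/\ tH u \subset G, tA u <| tH u, tth u \is a linear_char,
      {in tH u, forall h, (tth u ^ h)%CF = tth u}
    & cfker ('Ind[G] (tth u)) = N].

Definition A_spec (Af : triple -> {group gT}) : Prop :=
  forall u, nlinear u ->
    [/\ Af u <| tH u, cfker (tth u) \subset Af u,
        abelian (Af u / cfker (tth u))
      & forall M : {group gT}, M <| tH u -> cfker (tth u) \subset M ->
          abelian (M / cfker (tth u)) -> #|M| <= #|Af u| ]%N.

Variable Af : triple -> {group gT}.

Definition linTilde (u : triple) (phi : 'CF(Af u)) : Prop :=
  [/\ phi \is a linear_char, '['Res[tA u] phi, tth u] != 0
    & cfker ('Ind[G] phi) = N].

Definition same_orbit (u : triple) (phi psi : 'CF(Af u)) : Prop :=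
  exists sigma : {rmorphism algC -> algC},
    (forall a, sigma (tth u a) = tth u a) /\
    exists2 h, h \in tH u & psi = cfAut sigma (phi ^ h)%CF.

Definition reps_spec (reps : forall u : triple, pred 'CF(Af u)) : Prop :=
  forall u, nlinear u ->
    (forall phi, reps u phi -> linTilde u phi) /\
    (forall phi, linTilde u phi -> exists! psi, reps u psi /\ same_orbit u psi phi).

Variable reps : forall u : triple, pred 'CF(Af u).

Definition edge (u v : triple) : Prop :=
  tH u != tA u /\
  exists phi : 'CF(Af u),
    reps u phi /\ v = @Triple ('I_(tH u)[phi])%G (Af u) phi.

Definition root : triple := @Triple G N 1.

Definition is_path (p : seq triple) : Prop :=
  [/\ (0 < size p)%N, head root p = root,
      (forall i, (i < size p)%N -> nlinear (nth root p i))
    & forall i, (i.+1 < size p)%N -> edge (nth root p i) (nth root p i.+1)].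

Definition in_LN (u : triple) : Prop :=
  (exists p, is_path p /\ last root p = u) /\ tA u = tH u.

Definition good_leaf (u : triple) : Prop :=
  tA u = tH u /\
  exists p, [/\ is_path p, last root p = u &
    forall i, (0 < i < size p)%N ->
      forall x, x \in 'N_(tH (nth root p i.-1))(cfker (tth (nth root p i))) ->
        exists sigma : {rmorphism algC -> algC}, forall g,
          ('Ind[tH (nth root p i)] (tth u)) (g ^ x^-1) =
          sigma (('Ind[tH (nth root p i)] (tth u)) g)].

End Defs.

Section Idem.
Variables (gT : finGroupType) (G : {group gT}).

(* s is a set of representatives of Gal(Q(chi)/Q): each automorphism of C
   (restricted to algC) agrees on Q(chi) (generated by the values of chi)
   with exactly one element of s. *)
Definition gal_reps (chi : 'CF(G)) (s : seq {rmorphism algC -> algC}) : Prop :=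
  forall sigma : {rmorphism algC -> algC},
    count (fun tau : {rmorphism algC -> algC} =>
             [forall g, tau (chi g) == sigma (chi g)]) s = 1%N.

(* coefficient function of e_Q(chi) = chi(1)/|G| sum_sigma sum_g sigma(chi g) g^-1 *)
Definition eQ_coef (chi : 'CF(G)) (s : seq {rmorphism algC -> algC}) : gT -> algC :=
  fun g => if g \in G then
             (chi 1%g / #|G|%:R * \sum_(tau <- s) tau (chi (g^-1)%g))%R
           else 0.

Definition realizes (H : {group gT}) (K : {set gT}) (e : gT -> algC) : Prop :=
  exists psi : 'CF(H),
    [/\ psi \is a linear_char, cfker psi = K &
        exists s, gal_reps ('Ind[G] psi) s /\ {in G, e =1 eQ_coef ('Ind[G] psi) s}].

End Idem.

Arguments class_C {gT} G.
Arguments tH {gT} t.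
Arguments tA {gT} t.
Arguments tth {gT} t.
Arguments Triple {gT} tH tA tth.
Arguments nlinear {gT} G N u.
Arguments A_spec {gT} G N Af.
Arguments linTilde {gT} G N Af u phi.
Arguments same_orbit {gT} Af u phi psi.
Arguments reps_spec {gT} G N Af reps.
Arguments edge {gT} Af reps u v.
Arguments root {gT} G N.
Arguments is_path {gT} G N Af reps p.
Arguments in_LN {gT} G N Af reps u.
Arguments good_leaf {gT} G N Af reps u.
Arguments gal_reps {gT} G chi s.
Arguments eQ_coef {gT} G chi s g.
Arguments realizes {gT} G H K e.

(* Main.v *)
Require Import Defs.
From HB Require Import structures.
From mathcomp Require Import all_boot all_order all_algebra all_fingroup all_solvable all_field all_character.
Import Order.TTheory GRing.Theory Num.Theory.
Local Open Scope ring_scope.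

Section Idem.
Variables (gT : finGroupType) (G : {group gT}).

Lemma eQ_sum (chi chi' : 'CF(G)) s : chi \is a character ->
  \sum_(g in G) eQ_coef G chi s g * chi' g =
  chi 1%g * \sum_(tau <- s) '[chi', cfAut tau chi].
Proof.
move=> Nchi.
have E tau : '[chi', cfAut tau chi] = #|G|%:R^-1 * \sum_(x in G) chi' x * tau (chi x^-1)%g.
  rewrite cfdotE; congr (_ * _); apply: eq_bigr => x _.
  have := char_inv x^-1%g (etrans (cfAut_char tau chi) Nchi); rewrite invgK !cfunE => ->.
  by rewrite conjCK.
under [in RHS]eq_bigr do rewrite E.
rewrite -big_distrr /= mulrA (exchange_big) /= big_distrr /=.
apply: eq_bigr => x Gx.
rewrite /eQ_coef Gx -mulrA big_distrl /= [RHS]big_distrr /=.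
rewrite big_distrr; apply: eq_bigr => tau _; rewrite (mulrC (tau _)) mulrA /=.
by rewrite !mulrA.
Qed.

Lemma sum_has_ge1 (T : Type) (s : seq T) (f : T -> algC) (p : pred T) :
  (forall t, 0 <= f t) -> (forall t, p t -> 1 <= f t) -> has p s ->
  1 <= \sum_(t <- s) f t.
Proof.
move=> f0 fp; elim: s => [|a s IH] //=; rewrite big_cons.
case/orP=> [pa | hs].
  by apply: le_trans (fp a pa) _; rewrite lerDl sumr_ge0.
by apply: le_trans (IH hs) _; rewrite lerDr.
Qed.

Lemma sum_nz_exists (T : Type) (s : seq T) (f : T -> algC) :
  \sum_(t <- s) f t != 0 -> exists t, f t != 0.
Proof.
elim: s => [|a s IH]; first by rewrite big_nil eqxx.
rewrite big_cons; have [fa0|] := eqVneq (f a) 0; last by exists a.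
by rewrite fa0 add0r.
Qed.

Lemma idem_conj (chi chi' : 'CF(G)) s s' :
  chi \in irr G -> chi' \in irr G -> gal_reps G chi' s' ->
  {in G, eQ_coef G chi s =1 eQ_coef G chi' s'} ->
  exists tau : {rmorphism algC -> algC}, chi' = cfAut tau chi.
Proof.
move=> irrC irrC' gal eqE.
have Nchi := irrWchar irrC; have Nchi' := irrWchar irrC'.
have E : chi 1%g * \sum_(tau <- s) '[chi', cfAut tau chi] =
         chi' 1%g * \sum_(tau <- s') '[chi', cfAut tau chi'].
  rewrite -eQ_sum // -eQ_sum //; apply: eq_bigr => g Gg; by rewrite eqE.
have pos : 0 < chi' 1%g * \sum_(tau <- s') '[chi', cfAut tau chi'].
  rewrite mulr_gt0 //; first by case/irrP: irrC' => i ->; exact: irr1_gt0.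
  apply: lt_le_trans ltr01 _.
  apply: (@sum_has_ge1 _ _ _ (fun tau : {rmorphism algC -> algC} =>
             [forall g, tau (chi' g) == (idfun : {rmorphism algC -> algC}) (chi' g)])).
  - move=> tau; rewrite natr_ge0 // Cnat_cfdot_char //.
    by rewrite cfAut_char.
  - move=> tau /forallP Ht.
    have -> : cfAut tau chi' = chi' by apply/cfunP => g; rewrite cfunE (eqP (Ht g)).
    by rewrite irrWnorm.
  - by rewrite has_count (gal idfun).
have : \sum_(tau <- s) '[chi', cfAut tau chi] != 0.
  apply: contraTneq pos => H0; by rewrite -E H0 mulr0 ltxx.
case/sum_nz_exists => tau nz; exists tau.
case/irrP: irrC' nz => i ->; have := irrC; rewrite -(cfAut_irr tau).
case/irrP => j ->; rewrite cfdot_irr pnatr_eq0 eqb0 negbK => /eqP -> //.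
Qed.
End Idem.
Section Lin.
Variables (gT : finGroupType) (H : {group gT}).

Lemma lin_ker_eq1 (lam : 'CF(H)) x : lam \is a linear_char -> x \in H ->
  (x \in cfker lam) = (lam x == 1).
Proof.
move=> Llam Hx; rewrite cfkerEchar ?lin_charW // inE Hx lin_char1 //.
Qed.

Lemma lin_same_ker (lam mu : 'CF(H)) :
  lam \is a linear_char -> mu \is a linear_char -> cfker lam = cfker mu ->
  exists gam : {rmorphism algC -> algC}, mu = cfAut gam lam.
Proof.
move=> Llam Lmu eqK.
pose K := cfker lam.
have ZH : ('Z(lam))%CF = H.
  apply/eqP; rewrite eqEsubset cfcenter_sub; apply/subsetP=> x Hx.
  by rewrite char_cfcenterE ?lin_charW // normC_lin_char // lin_char1.
have cycHK : cyclic (H / K)%g by rewrite -{1}ZH cfcenter_cyclic.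
have nKH : (H \subset 'N(K))%g by apply: normal_norm; apply: cfker_normal.
case/cyclicP: cycHK => xb defHK.
have : xb \in (H / K)%g by rewrite defHK cycle_id.
case/morphimP => g Ng Hg defxb.
have powE n : (lam g ^+ n == 1) = (mu g ^+ n == 1).
  by rewrite -(lin_charX Llam n Hg) -(lin_charX Lmu n Hg) -(lin_ker_eq1 _ _ Llam (groupX n Hg)) -(lin_ker_eq1 _ _ Lmu (groupX n Hg)) eqK.
have [d prim_z _] := prim_order_exists (order_gt0 g) (lin_char_unity_root Llam Hg).
have [d' prim_w _] := prim_order_exists (order_gt0 g) (lin_char_unity_root Lmu Hg).
have dd' : d = d'.
  apply/eqP; rewrite eqn_dvd (prim_order_dvd prim_z) (prim_order_dvd prim_w).
  by rewrite powE (prim_expr_order prim_w) -powE (prim_expr_order prim_z) eqxx.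
subst d'.
have [[k lt_k] /= defw] := prim_rootP prim_z (prim_expr_order prim_w).
have cop : coprime k d by rewrite -(prim_root_exp_coprime k prim_z) -defw.
have [gam Hgam] := Qn_aut_exists cop.
have gz : gam (lam g) = mu g by rewrite Hgam ?(prim_expr_order prim_z) // defw.
exists gam; apply/cfun_inP => h Hh; rewrite cfunE.
have : coset K h \in <[xb]>%g by rewrite -defHK mem_quotient.
case/cycleP => j; rewrite defxb -morphX // => /rcoset_kercosetP.
rewrite (subsetP nKH) // groupX // => /(_ isT isT) /rcosetP [k0 Kk0 ->].
have Hk0 : k0 \in H by apply: (subsetP (cfker_sub lam)).
rewrite !lin_charM ?groupX // !lin_charX // rmorphM rmorphXn gz.
have := Kk0; rewrite lin_ker_eq1 // => /eqP ->.
have Kl : k0 \in cfker lam := Kk0.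
have Km : k0 \in cfker mu by rewrite -eqK.
move: Kl Km; rewrite !lin_ker_eq1 // => _ /eqP ->.
by rewrite rmorph1.
Qed.
End Lin.

Section Helpers.
Variable gT : finGroupType.

Lemma sum_nz_exists_in (T : eqType) (s : seq T) (f : T -> algC) :
  \sum_(t <- s) f t != 0 -> exists2 t, t \in s & f t != 0.
Proof.
elim: s => [|a s IH]; first by rewrite big_nil eqxx.
rewrite big_cons; have [fa0|] := eqVneq (f a) 0; last by exists a; rewrite ?mem_head.
rewrite fa0 add0r => /IH [t ts ft]; exists t => //; by rewrite in_cons ts orbT.
Qed.

Lemma irr_dot_eq (H : {group gT}) (chi psi : 'CF(H)) :
  chi \in irr H -> psi \in irr H -> '[chi, psi] != 0 -> chi = psi.
Proof.
case/irrP=> i -> /irrP [j ->]; rewrite cfdot_irr pnatr_eq0 eqb0 negbK.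
by move/eqP ->.
Qed.

Lemma over_Res (B A H : {group gT}) (chi : 'CF(H)) (phi : 'CF(A)) (th : 'CF(B)) :
  B \subset A -> A \subset H -> chi \is a character -> phi \in irr A ->
  th \in irr B -> '['Res[A] chi, phi] != 0 -> '['Res[B] phi, th] != 0 ->
  '['Res[B] chi, th] != 0.
Proof.
move=> sBA sAH Nchi /irrP[j ->] /irrP[q ->] h1 h2.
rewrite -irr_consttE -(cfResRes _ sBA sAH).
apply: (constt_Res_trans (j := j)); first by rewrite cfRes_char.
  by rewrite irr_consttE.
by rewrite irr_consttE.
Qed.

Lemma over_Ind (A I H : {group gT}) (al : 'CF(I)) (phi : 'CF(A)) :
  A \subset I -> I \subset H -> al \in irr I -> 'Ind[H] al \in irr H ->
  phi \in irr A -> '['Res[A] al, phi] != 0 -> '['Res[A] ('Ind[H] al), phi] != 0.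
Proof.
move=> sAI sIH /irrP[s Ds] /irrP[r Dr] irrphi h.
apply: (@over_Res A I H ('Ind[H] al) al phi) => //.
- by rewrite Dr irr_char.
- by rewrite Ds mem_irr.
rewrite Dr Ds -irr_consttE -constt_Ind_Res -Ds Dr constt_irr inE. by [].
Qed.

Lemma clifford_constt (A H : {group gT}) (chi : 'CF(H)) (phi psi : 'CF(A)) :
  (A <| H)%g -> chi \in irr H -> phi \in irr A -> psi \in irr A ->
  '['Res[A] chi, phi] != 0 -> '['Res[A] chi, psi] != 0 ->
  psi \in (phi ^: H)%CF.
Proof.
move=> nsAH /irrP[i ->] /irrP[j ->] irrpsi h1.
rewrite (Clifford_Res_sum_cfclass nsAH (j := j)); last by rewrite irr_consttE.
rewrite cfdotZl mulf_eq0 negb_or => /andP[_]; rewrite cfdot_suml.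
case/sum_nz_exists_in => xi xiS nz.
have := xiS; case/cfclassP => y Hy Dxi.
have irrxi : xi \in irr A by rewrite Dxi cfConjg_irr ?mem_irr.
by rewrite -(@irr_dot_eq A xi psi irrxi irrpsi nz).
Qed.

End Helpers.
Section Main.
Variables (gT : finGroupType) (G N : {group gT}) (Af : triple gT -> {group gT})
  (reps : forall u : triple gT, pred 'CF(Af u)).
Hypotheses (hA : A_spec G N Af) (hR : reps_spec G N Af reps).

Lemma A_sub u : nlinear G N u -> (tA u \subset Af u)%g.
Proof.
move=> nu; have [nsMH sKM abM maxM] := hA u nu.
case: nu => sHG nsAH Lth inv _.
have sAH := normal_sub nsAH; have nAH := normal_norm nsAH.
have nKH : (tH u \subset 'N(cfker (tth u)))%g.
  apply/subsetP => h Hh; apply/normP.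
  by rewrite -cfker_conjg ?(subsetP nAH) // inv.
have nsLH := normalY nsMH nsAH.
have sKL : (cfker (tth u) \subset Af u <*> tA u)%g.
  exact: subset_trans sKM (joing_subl _ _).
have nMK := subset_trans (normal_sub nsMH) nKH.
have nAK := subset_trans sAH nKH.
have abL : abelian ((Af u <*> tA u) / cfker (tth u))%g.
  rewrite quotientY // abelianY abM sub_der1_abelian ?lin_char_der1 //=.
  rewrite quotient_cents2 // /commg_set gen_subG.
  apply/subsetP => c /imset2P [a m Aa Mm ->].
  have Hm : m \in tH u by apply: (subsetP (normal_sub nsMH)).
  have Ham : (a ^ m \in tA u)%g by rewrite memJ_norm ?(subsetP nAH).
  have Hai : (a^-1 \in tA u)%g by rewrite groupV.
  have Hc : (a^-1 * a ^ m \in tA u)%g by apply: groupM.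
  rewrite commgEl lin_ker_eq1 //.
  rewrite (lin_charM Lth Hai Ham) -{2}(inv m Hm) cfConjgEJ ?(subsetP nAH) //.
  by rewrite -(lin_charM Lth Hai Aa) mulVg lin_char1.
have := maxM (Af u <*> tA u)%G nsLH sKL abL.
have [le _] := subset_leqif_card (joing_subl (Af u) (tA u)).
move=> le2; have : (#|Af u| == #|(Af u <*> tA u)%g|)%N by rewrite eqn_leq le2 le.
have [_ ->] := subset_leqif_card (joing_subl (Af u) (tA u)).
by move=> sLM; apply: subset_trans sLM; apply: joing_subr.
Qed.

Lemma chain_step v (phi : 'CF(Af v)) (L : {group gT}) (th : 'CF(L)) :
  nlinear G N v -> reps v phi ->
  (L \subset 'I_(tH v)[phi])%g ->
  'Ind[('I_(tH v)[phi])%G] th \in irr ('I_(tH v)[phi])%G ->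
  '['Res[Af v] ('Ind[('I_(tH v)[phi])%G] th), phi] != 0 ->
  [/\ (L \subset tH v)%g, 'Ind[tH v] th \in irr (tH v)
    & '['Res[tA v] ('Ind[tH v] th), tth v] != 0].
Proof.
move=> nv rphi sLI irrI overI.
have [nsMH _ _ _] := hA v nv.
have [linT _] := hR v nv.
have [Lphi over_th _] := linT phi rphi.
have [sHG nsAH Lth inv _] := nv.
have sIH : (('I_(tH v)[phi])%G \subset tH v)%g by apply: subsetIl.
have sMI : (Af v \subset ('I_(tH v)[phi])%G)%g.
  by apply: sub_Inertia; apply: normal_sub.
have sLH := subset_trans sLI sIH.
have /irrP [t Dt] := lin_char_irr Lphi.
subst phi.
have /irrP [s Ds] := irrI.
have As : s \in irr_constt ('Ind[('I_(tH v)['chi_t])%G] 'chi_t).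
  by rewrite constt_Ind_Res irr_consttE -Ds.
have [irrInd _ _ _ _] := constt_Inertia_bijection t nsMH.
have irrH : 'Ind[tH v] th \in irr (tH v).
  by rewrite -(cfIndInd th sIH sLI) Ds; exact: irrInd s As.
split=> //.
apply: (@over_Res _ (tA v) (Af v) (tH v) ('Ind[tH v] th) 'chi_t (tth v)) => //.
- exact: A_sub.
- exact: normal_sub.
- exact: irrWchar.
- exact: mem_irr.
- exact: lin_char_irr.
rewrite -(cfIndInd th sIH sLI).
apply: over_Ind => //; first by rewrite cfIndInd.
exact: mem_irr.
Qed.

Lemma chain p u : is_path G N Af reps p -> last (Defs.root G N) p = u -> tA u = tH u ->
  forall i, (i < size p)%N ->
  [/\ (tA u \subset tH (nth (Defs.root G N) p i))%g,
      'Ind[tH (nth (Defs.root G N) p i)] (tth u) \in irr (tH (nth (Defs.root G N) p i))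
    & '['Res[tA (nth (Defs.root G N) p i)] ('Ind[tH (nth (Defs.root G N) p i)] (tth u)),
        tth (nth (Defs.root G N) p i)] != 0].
Proof.
move=> [p0 _ nlin edges] lastp Heq.
suff H d : forall i, (i + d = (size p).-1)%N -> [/\ (tA u \subset tH (nth (Defs.root G N) p i))%g,
      'Ind[tH (nth (Defs.root G N) p i)] (tth u) \in irr (tH (nth (Defs.root G N) p i))
    & '['Res[tA (nth (Defs.root G N) p i)] ('Ind[tH (nth (Defs.root G N) p i)] (tth u)),
        tth (nth (Defs.root G N) p i)] != 0].
  move=> i ltip; apply: (H ((size p).-1 - i)%N); rewrite subnKC //.
  by rewrite -ltnS prednK.
elim: d => [|d IH] i.
  rewrite addn0 => ->; rewrite nth_last lastp -Heq cfInd_id cfRes_id.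
  have Lu : tth u \is a linear_char.
    have lt1 : ((size p).-1 < size p)%N by rewrite prednK.
    by have := nlin _ lt1; rewrite nth_last lastp; case.
  by rewrite lin_char_irr // irrWnorm ?lin_char_irr // oner_eq0.
move=> Hi.
have lti : (i.+1 < size p)%N.
  by rewrite -(prednK p0) ltnS -Hi addnS ltnS leq_addr.
move: Hi; rewrite addnS -addSn => /IH [] {IH}.
have [_ [phi [rphi ->]]] := edges i lti.
move=> /= sLI irrI overI.
apply: (@chain_step _ phi) => //. apply: nlin; exact: ltnW.
Qed.

Lemma descent_step v (phi : 'CF(Af v)) (L L' : {group gT}) (th : 'CF(L)) (th' : 'CF(L'))
    (tau : {rmorphism algC -> algC}) :
  nlinear G N v -> reps v phi ->
  (L \subset 'I_(tH v)[phi])%g -> (L' \subset 'I_(tH v)[phi])%g ->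
  'Ind[('I_(tH v)[phi])%G] th \in irr ('I_(tH v)[phi])%G ->
  'Ind[('I_(tH v)[phi])%G] th' \in irr ('I_(tH v)[phi])%G ->
  '['Res[Af v] ('Ind[('I_(tH v)[phi])%G] th), phi] != 0 ->
  '['Res[Af v] ('Ind[('I_(tH v)[phi])%G] th'), phi] != 0 ->
  'Ind[tH v] th' = cfAut tau ('Ind[tH v] th) ->
  (forall x, (x \in 'N_(tH v)(cfker phi))%g -> exists sigma : {rmorphism algC -> algC},
     forall g, ('Ind[('I_(tH v)[phi])%G] th) (g ^ x^-1)%g = sigma (('Ind[('I_(tH v)[phi])%G] th) g)) ->
  exists tau' : {rmorphism algC -> algC},
    'Ind[('I_(tH v)[phi])%G] th' = cfAut tau' ('Ind[('I_(tH v)[phi])%G] th).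
Proof.
move=> nv rphi sLI sL'I irrI irrI' overI overI' Eq hgood.
have [nsMH _ _ _] := hA v nv.
have [linT _] := hR v nv.
have [Lphi _ _] := linT phi rphi.
have nMH := normal_norm nsMH.
have sIH : (('I_(tH v)[phi])%G \subset tH v)%g by apply: subsetIl.
have sMI : (Af v \subset ('I_(tH v)[phi])%G)%g.
  by apply: sub_Inertia; apply: normal_sub.
have /irrP [t Dt] := lin_char_irr Lphi.
subst phi.
set I := ('I_(tH v)['chi_t])%G in sLI sL'I irrI irrI' overI overI' hgood sIH sMI *.
have [irrInd _ _ _ _] := constt_Inertia_bijection t nsMH.
have /irrP [s Ds] := irrI; have /irrP [s' Ds'] := irrI'.
have As' : s' \in irr_constt ('Ind[I] 'chi_t).
  by rewrite constt_Ind_Res irr_consttE -Ds'.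
have As : s \in irr_constt ('Ind[I] 'chi_t).
  by rewrite constt_Ind_Res irr_consttE -Ds.
have irrH' : 'Ind[tH v] th' \in irr (tH v).
  by rewrite -(cfIndInd th' sIH sL'I) Ds'; exact: irrInd s' As'.
have irrH : 'Ind[tH v] th \in irr (tH v).
  by rewrite -(cfIndInd th sIH sLI) Ds; exact: irrInd s As.
have : cfAut tau 'chi_t \in ('chi_t ^: tH v)%CF.
  apply: (@clifford_constt _ (Af v) (tH v) ('Ind[tH v] th') 'chi_t (cfAut tau 'chi_t) nsMH irrH') => //.
  - exact: mem_irr.
  - by rewrite cfAut_irr mem_irr.
  - rewrite -(cfIndInd th' sIH sL'I); apply: over_Ind => //; first by rewrite cfIndInd.
    exact: mem_irr.
  rewrite Eq -cfAutRes cfdot_aut_irr fmorph_eq0.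
  rewrite -(cfIndInd th sIH sLI); apply: over_Ind => //; first by rewrite cfIndInd.
  exact: mem_irr.
case/cfclassP => x Hx Dx.
have nK : (x \in 'N(cfker 'chi_t))%g.
  by apply/normP; rewrite -cfker_conjg ?(subsetP nMH) // -Dx cfker_aut.
have xN : (x^-1 \in 'N_(tH v)(cfker 'chi_t))%g by rewrite groupV inE Hx nK.
have Iaut : 'I[cfAut tau 'chi_t]%g = 'I['chi_t]%g.
  by apply/setP => y; rewrite !inE -cfAutConjg (inj_eq (cfAut_inj tau)).
have xI : (x \in 'N(I))%g.
  apply/normP; rewrite /= conjIg conjGid // conjg_inertia ?(subsetP nMH) //.
  by rewrite -Dx Iaut.
have [sigma hs] := hgood _ xN.
have alx : ('Ind[I] th ^ x^-1)%CF = cfAut sigma ('Ind[I] th).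
  by apply/cfunP => g; rewrite cfConjgE ?groupV // cfunE hs.
pose t2 := aut_Iirr tau t.
have Dt2 : 'chi_t2 = cfAut tau 'chi_t := aut_IirrE tau t.
have eqT : ('I_(tH v)['chi_t2])%G = I by apply: group_inj; rewrite /= Dt2 Iaut.
have := constt_Inertia_bijection t2 nsMH; rewrite eqT => -[_ injInd _ _ _].
pose a := aut_Iirr tau s; pose b := conjg_Iirr s' x.
have Aa : a \in irr_constt ('Ind[I] 'chi_t2).
  rewrite constt_Ind_Res irr_consttE /a aut_IirrE Dt2 -cfAutRes cfdot_aut_irr.
  by rewrite fmorph_eq0 -Ds.
have Ab : b \in irr_constt ('Ind[I] 'chi_t2).
  rewrite constt_Ind_Res irr_consttE /b conjg_IirrE -cfConjgRes_norm ?(subsetP nMH) //.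
  by rewrite Dt2 Dx cfConjg_iso -Ds'.
have eqab : a = b.
  apply: injInd => //; rewrite /Ind_Iirr; congr cfIirr.
  rewrite /a /b aut_IirrE conjg_IirrE -(cfConjgInd_norm _ xI (subsetP (normG (tH v)) x Hx)).
  by rewrite cfConjg_id // -cfAutInd -Ds -Ds' !cfIndInd.
have : 'chi_a = 'chi_b by rewrite eqab.
rewrite /a /b aut_IirrE conjg_IirrE -Ds -Ds' => Eab.
exists (tau \o sigma : {rmorphism algC -> algC}).
rewrite -(cfConjgK x ('Ind[I] th')) -Eab -cfAutConjg alx.
by apply/cfunP => g; rewrite !cfunE.
Qed.

Lemma final_step v (phi phi' : 'CF(Af v)) (L L' : {group gT}) (th : 'CF(L)) (th' : 'CF(L'))
    (tau : {rmorphism algC -> algC}) :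
  nlinear G N v -> reps v phi -> reps v phi' ->
  (L \subset 'I_(tH v)[phi])%g -> (L' \subset 'I_(tH v)[phi'])%g ->
  'Ind[('I_(tH v)[phi])%G] th \in irr ('I_(tH v)[phi])%G ->
  'Ind[('I_(tH v)[phi'])%G] th' \in irr ('I_(tH v)[phi'])%G ->
  '['Res[Af v] ('Ind[('I_(tH v)[phi])%G] th), phi] != 0 ->
  '['Res[Af v] ('Ind[('I_(tH v)[phi'])%G] th'), phi'] != 0 ->
  'Ind[tH v] th' = cfAut tau ('Ind[tH v] th) ->
  phi = phi'.
Proof.
move=> nv rphi rphi' sLI sL'I irrI irrI' overI overI' Eq.
have [_ irrH overH] := @chain_step v phi L th nv rphi sLI irrI overI.
have [_ irrH' overH'] := @chain_step v phi' L' th' nv rphi' sL'I irrI' overI'.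
have [nsMH _ _ _] := hA v nv.
have [linT uniq] := hR v nv.
have [Lphi _ _] := linT phi rphi.
have [Lphi' _ _] := linT phi' rphi'.
have lin' := linT phi' rphi'.
have [sHG nsAH Lth inv _] := nv.
have nAH := normal_norm nsAH.
have sIH : (('I_(tH v)[phi])%G \subset tH v)%g by apply: subsetIl.
have sI'H : (('I_(tH v)[phi'])%G \subset tH v)%g by apply: subsetIl.
have sMI : (Af v \subset ('I_(tH v)[phi])%G)%g.
  by apply: sub_Inertia; apply: normal_sub.
have sMI' : (Af v \subset ('I_(tH v)[phi'])%G)%g.
  by apply: sub_Inertia; apply: normal_sub.
have fixth : cfAut tau (tth v) = tth v.
  have : cfAut tau (tth v) \in (tth v ^: tH v)%CF.
    apply: (@clifford_constt _ (tA v) (tH v) ('Ind[tH v] th') (tth v) (cfAut tau (tth v)) nsAH irrH') => //.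
    - exact: lin_char_irr.
    - by rewrite cfAut_irr lin_char_irr.
    by rewrite Eq -cfAutRes cfdot_aut_char ?lin_charW // fmorph_eq0.
  rewrite cfclass_invariant; first by rewrite mem_seq1 => /eqP.
  by apply/subsetP => h Hh; rewrite inE (subsetP nAH) //= inv.
have : cfAut tau phi \in (phi' ^: tH v)%CF.
  apply: (@clifford_constt _ (Af v) (tH v) ('Ind[tH v] th') phi' (cfAut tau phi) nsMH irrH').
  - exact: lin_char_irr.
  - by rewrite cfAut_irr lin_char_irr.
  - rewrite -(cfIndInd th' sI'H sL'I); apply: over_Ind => //; first by rewrite cfIndInd.
    exact: lin_char_irr.
  rewrite Eq -cfAutRes cfdot_aut_char ?lin_charW // fmorph_eq0.
  rewrite -(cfIndInd th sIH sLI); apply: over_Ind => //; first by rewrite cfIndInd.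
  exact: lin_char_irr.
case/cfclassP => x Hx Dx.
have so1 : same_orbit Af v phi phi'.
  exists tau; split.
    by move=> a; have := congr1 (fun f : 'CF(tA v) => f a) fixth; rewrite /= cfunE.
  exists x^-1%g; first by rewrite groupV.
  by rewrite cfAutConjg Dx cfConjgK.
have so2 : same_orbit Af v phi' phi'.
  exists (idfun : {rmorphism algC -> algC}); split => //.
  exists 1%g; first exact: group1.
  by rewrite cfConjgJ1; apply/cfunP => g; rewrite cfunE.
have [psi [_ U]] := uniq phi' lin'.
by rewrite -(U phi (conj rphi so1)) (U phi' (conj rphi' so2)).
Qed.

Lemma main_lemma u u' :
  good_leaf G N Af reps u ->
  in_LN G N Af reps u' -> u' <> u ->
  ~ (exists e : gT -> algC,
       realizes G (tH u) (cfker (tth u)) e /\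
       realizes G (tH u') (cfker (tth u')) e).
Proof.
move=> [eqA [p [pathp lastp good]]] [[p' [pathp' lastp']] eqA'] neq.
move=> [e [[psi [Lpsi kpsi [s [gals eqs]]]] [psi' [Lpsi' kpsi' [s' [gals' eqs']]]]]].
move: u u' eqA eqA' lastp lastp' good neq psi psi' Lpsi Lpsi' kpsi kpsi' eqs eqs' gals gals'.
case=> H A th; case=> H' A' th' /= eqA eqA'; subst A A'.
move=> lastp lastp' good neq psi psi' Lpsi Lpsi' kpsi kpsi' eqs eqs' gals gals'.
have chp := @chain p _ pathp lastp (erefl H).
have chp' := @chain p' _ pathp' lastp' (erefl H').
have [p0 headp nlin edges] := pathp.
have [p0' headp' nlin' edges'] := pathp'.
have Lth : th \is a linear_char.
  have lt1 : ((size p).-1 < size p)%N by rewrite prednK.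
  by have := nlin _ lt1; rewrite nth_last lastp; case.
have Lth' : th' \is a linear_char.
  have lt1 : ((size p').-1 < size p')%N by rewrite prednK.
  by have := nlin' _ lt1; rewrite nth_last lastp'; case.
have base : exists tau : {rmorphism algC -> algC}, 'Ind[G] th' = cfAut tau ('Ind[G] th).
  have [_ irrG _] := chp 0%N p0.
  have [_ irrG' _] := chp' 0%N p0'.
  rewrite nth0 headp /= in irrG; rewrite nth0 headp' /= in irrG'.
  have [gam Dpsi] := @lin_same_ker _ _ _ _ Lth Lpsi (esym kpsi).
  have [gam' Dth'] := @lin_same_ker _ _ _ _ Lpsi' Lth' kpsi'.
  have irrP1 : 'Ind[G] psi \in irr G by rewrite Dpsi -cfAutInd cfAut_irr.
  have irrP2 : 'Ind[G] psi' \in irr G.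
    by rewrite -(cfAut_irr gam') cfAutInd -Dth'.
  have eqE : {in G, eQ_coef G ('Ind[G] psi) s =1 eQ_coef G ('Ind[G] psi') s'}.
    by move=> g Gg; rewrite -eqs // eqs'.
  have [tau Etau] := @idem_conj _ _ _ _ _ _ irrP1 irrP2 gals' eqE.
  exists (gam' \o tau \o gam : {rmorphism algC -> algC}).
  rewrite Dth' -cfAutInd Etau Dpsi -cfAutInd.
  by apply/cfunP => g; rewrite !cfunE.
have claim : forall k, (k < size p)%N -> (k < size p')%N ->
  nth (Defs.root G N) p k = nth (Defs.root G N) p' k /\
  exists tau : {rmorphism algC -> algC},
    'Ind[tH (nth (Defs.root G N) p k)] th' = cfAut tau ('Ind[tH (nth (Defs.root G N) p k)] th).
  elim=> [|k IH] ltp ltp'.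
    by rewrite !nth0 headp headp'; split.
  have [Ek [tau Etau]] := IH (ltnW ltp) (ltnW ltp').
  have [_ [phi [rphi Ep]]] := edges k ltp.
  have [_ [phi' [rphi' Ep']]] := edges' k ltp'.
  move: phi' rphi' Ep'; rewrite -Ek => phi' rphi' Ep'.
  have nv := nlin k (ltnW ltp).
  have [sL irrL overL] := chp k.+1 ltp; rewrite Ep /= in sL irrL overL.
  have [sL' irrL' overL'] := chp' k.+1 ltp'; rewrite Ep' /= in sL' irrL' overL'.
  have eqphi : phi = phi' :=
    @final_step _ phi phi' H H' th th' tau nv rphi rphi' sL sL' irrL irrL' overL overL' Etau.
  subst phi'.
  split; first by rewrite Ep Ep'.
  rewrite Ep /=.
  apply: (@descent_step _ phi H H' th th' tau nv rphi sL sL' irrL irrL' overL overL' Etau).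
  move=> x Nx; have := good k.+1 _ x; rewrite /= Ep /=; apply => //.
have lp : ((size p).-1 < size p)%N by rewrite prednK.
have lp' : ((size p').-1 < size p')%N by rewrite prednK.
case: (ltngtP (size p) (size p')) => [lt|lt|eqs0].
- have lt2 : ((size p).-1 < size p')%N by apply: leq_trans lp (ltnW lt).
  have [Em _] := claim _ lp lt2.
  have lt3 : ((size p).-1.+1 < size p')%N by rewrite prednK.
  have [neqHA _] := edges' _ lt3.
  by move: neqHA; rewrite -Em nth_last lastp /= eqxx.
- have lt2 : ((size p').-1 < size p)%N by apply: leq_trans lp' (ltnW lt).
  have [Em _] := claim _ lt2 lp'.
  have lt3 : ((size p').-1.+1 < size p)%N by rewrite prednK.
  have [neqHA _] := edges _ lt3.
  by move: neqHA; rewrite Em nth_last lastp' /= eqxx.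
- have lt2 : ((size p).-1 < size p')%N by rewrite eqs0.
  have [Em _] := claim _ lp lt2.
  by apply: neq; rewrite -lastp -lastp' -!nth_last Em eqs0.
Qed.

End Main.

Theorem lemma5 (gT : finGroupType) (G N : {group gT})
    (Af : triple gT -> {group gT})
    (reps : forall u : triple gT, pred 'CF(Af u))
    (u u' : triple gT) :
  class_C G -> (N <| G)%g ->
  A_spec G N Af -> reps_spec G N Af reps ->
  good_leaf G N Af reps u ->
  in_LN G N Af reps u' -> u' <> u ->
  ~ (exists e : gT -> algC,
       realizes G (tH u) (cfker (tth u)) e /\
       realizes G (tH u') (cfker (tth u')) e).
Proof.
move=> _ _ hA hR; exact: (@main_lemma gT G N Af reps hA hR u u').
Qed.
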